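(* For every positive integer $n$, $$\sum_{j=1}^{n}\csc^4\left(\frac{\pi(2j-1)}{4n}\right) = \frac{4n^2(2n^2+1)}{3}.$$ *)

(* Defs.v *)
From Stdlib Require Import Reals.
Open Scope R_scope.

Definition csc (x : R) : R := / sin x.

(* Main.v *)
Require Import Defs.
From Stdlib Require Import Reals.
From Stdlib Require Import Lra Lia.
Open Scope R_scope.

Fixpoint H (i : nat) (x : R) : R :=
  match i with O => 1 | S i' => H i' x + 2 * cos (2 * INR (S i') * x) end.
Fixpoint Ssin (j : nat) (x : R) : R :=
  match j with O => 0 | S j' => Ssin j' x + sin ((2 * INR j' + 1) * x) end.
Fixpoint G (j : nat) (x : R) : R :=
  match j with O => 0 | S j' => G j' x + H j' x end.
Fixpoint GG (i : nat) (x : R) : R :=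
  match i with O => 0 | S i' => GG i' x + G (S i') x end.
Fixpoint K (m : nat) (x : R) : R :=
  match m with O => 0 | S m' => K m' x + (/ sin x) ^ 2 * H m' x end.

Lemma L1 i x : sin x * H i x = sin ((2 * INR i + 1) * x).
Proof.
  induction i as [|i IH]; cbn [H].
  - simpl. rewrite Rmult_1_r. f_equal. ring.
  - rewrite Rmult_plus_distr_l, IH. rewrite S_INR.
    replace ((2 * (INR i + 1) + 1) * x) with (2 * (INR i + 1) * x + x) by ring.
    replace ((2 * INR i + 1) * x) with (2 * (INR i + 1) * x - x) by ring.
    rewrite sin_plus, sin_minus. ring.
Qed.

Lemma L2 j x : sin (INR j * x) ^ 2 = sin x * Ssin j x.
Proof.
  induction j as [|j IH]; cbn [Ssin].
  - simpl INR. rewrite Rmult_0_l, sin_0. ring.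
  - rewrite Rmult_plus_distr_l, <- IH. rewrite S_INR.
    replace ((INR j + 1) * x) with (INR j * x + x) by ring.
    replace ((2 * INR j + 1) * x) with (2 * (INR j * x) + x) by ring.
    rewrite sin_plus, sin_plus, sin_2a, cos_2a.
    pose proof (sin2_cos2 x) as E. unfold Rsqr in E.
    set (a := sin (INR j * x)) in *. set (b := cos (INR j * x)) in *.
    set (s := sin x) in *. set (c := cos x) in *.
    assert (D : (a * c + b * s) ^ 2 - (a ^ 2 + s * (2 * a * b * c + (b * b - a * a) * s))
              = a ^ 2 * (s * s + c * c - 1)) by ring.
    rewrite E in D. lra.
Qed.

Lemma L3 j x : sin x * G j x = Ssin j x.
Proof.
  induction j as [|j IH]; simpl.
  - ring.
  - rewrite Rmult_plus_distr_l, IH, L1. reflexivity.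
Qed.

Lemma LG j x : sin (INR j * x) ^ 2 = sin x ^ 2 * G j x.
Proof. rewrite L2, <- L3. ring. Qed.

Lemma L4 t x : sin x <> 0 ->
  (/ sin x) ^ 2 * cos (2 * INR t * x) = (/ sin x) ^ 2 - 2 * G t x.
Proof.
  intro Hs. replace (2 * INR t * x) with (2 * (INR t * x)) by ring.
  rewrite cos_2a_sin.
  replace (1 - 2 * sin (INR t * x) * sin (INR t * x)) with (1 - 2 * sin (INR t * x) ^ 2) by ring.
  rewrite LG. field. exact Hs.
Qed.

Lemma L5 i x : sin x <> 0 ->
  (/ sin x) ^ 2 * H i x = (2 * INR i + 1) * (/ sin x) ^ 2 - 4 * GG i x.
Proof.
  intro Hs. induction i as [|i IH]; cbn [H GG].
  - simpl. ring.
  - rewrite Rmult_plus_distr_l, IH.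
    replace ((/ sin x) ^ 2 * (2 * cos (2 * INR (S i) * x)))
      with (2 * ((/ sin x) ^ 2 * cos (2 * INR (S i) * x))) by ring.
    rewrite L4 by exact Hs. rewrite S_INR. ring.
Qed.

Lemma LK m x : K m x = (/ sin x) ^ 2 * G m x.
Proof. induction m as [|m IH]; simpl. ring. rewrite IH. ring. Qed.

Definition th (n k : nat) : R := PI * (2 * INR k + 1) / (4 * INR n).
Definition Sm (n : nat) (f : R -> R) : R := sum_f_R0 (fun k => f (th n k)) (n - 1).

Lemma S_plus n f g : Sm n (fun x => f x + g x) = Sm n f + Sm n g.
Proof. unfold Sm. apply sum_plus. Qed.
Lemma S_scal n c f : Sm n (fun x => c * f x) = c * Sm n f.
Proof. unfold Sm. rewrite scal_sum. apply sum_eq. intros; ring. Qed.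
Lemma S_minus n f g : Sm n (fun x => f x - g x) = Sm n f - Sm n g.
Proof. unfold Sm. apply minus_sum. Qed.
Lemma S_cte n c : (1 <= n)%nat -> Sm n (fun _ => c) = INR n * c.
Proof. intro. unfold Sm. rewrite sum_cte. replace (S (n - 1)) with n by lia. ring. Qed.
Lemma S_ext n f g : (forall k, (k <= n - 1)%nat -> f (th n k) = g (th n k)) -> Sm n f = Sm n g.
Proof. intro. unfold Sm. apply sum_eq. auto. Qed.

Lemma telesc (f : nat -> R) N : sum_f_R0 (fun k => f (S k) - f k) N = f (S N) - f O.
Proof. induction N as [|N IH]; simpl. ring. rewrite IH. ring. Qed.

Lemma INR_pos n : (1 <= n)%nat -> 0 < INR n.
Proof. intro. apply lt_0_INR. lia. Qed.

Lemma Ccos n t : (1 <= n)%nat -> (1 <= t)%nat -> (t <= 2 * n - 1)%nat ->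
  Sm n (fun x => cos (2 * INR t * x)) = 0.
Proof.
  intros Hn Ht1 Ht2.
  pose proof (INR_pos n Hn) as Pn.
  assert (Pt : 1 <= INR t) by (apply (le_INR 1); lia).
  assert (Tt : INR t + 1 <= 2 * INR n).
  { rewrite <- S_INR. replace 2 with (INR 2) by (simpl; ring). rewrite <- mult_INR. apply le_INR. lia. }
  set (a := INR t * PI / (2 * INR n)).
  assert (Sa : sin a <> 0).
  { apply Rgt_not_eq. apply sin_gt_0; unfold a.
    - apply Rdiv_lt_0_compat. pose proof PI_RGT_0. nra. lra.
    - apply Rmult_lt_reg_r with (2 * INR n). lra.
      unfold Rdiv. rewrite Rmult_assoc, Rinv_l by lra. pose proof PI_RGT_0. nra. }
  assert (E : 2 * sin a * Sm n (fun x => cos (2 * INR t * x)) = 0).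
  { unfold Sm. rewrite scal_sum.
    rewrite (sum_eq _ (fun k => sin (2 * a * INR (S k)) - sin (2 * a * INR k))).
    - rewrite (telesc (fun k => sin (2 * a * INR k))). replace (S (n - 1)) with n by lia.
      simpl INR. rewrite Rmult_0_r, sin_0.
      replace (2 * a * INR n) with (IZR (Z.of_nat t) * PI).
      + rewrite sin_eq_0_1. ring. eauto.
      + unfold a. rewrite <- INR_IZR_INZ. field. lra.
    - intros k _. unfold th. rewrite S_INR.
      replace (2 * INR t * (PI * (2 * INR k + 1) / (4 * INR n))) with (2 * a * INR k + a)
        by (unfold a; field; lra).
      replace (2 * a * (INR k + 1)) with ((2 * a * INR k + a) + a) by ring.
      replace (2 * a * INR k) with ((2 * a * INR k + a) - a) at 3 by ring.
      rewrite sin_plus, sin_minus. ring. }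
  apply Rmult_integral in E. destruct E as [E|E]; [|exact E].
  exfalso. apply Sa. lra.
Qed.

Lemma SH n i : (1 <= n)%nat -> (i <= 2 * n - 1)%nat -> Sm n (H i) = INR n.
Proof.
  intros Hn. induction i as [|i IH]; intro Hi.
  - unfold H. rewrite S_cte by exact Hn. ring.
  - change (H (S i)) with (fun x => H i x + 2 * cos (2 * INR (S i) * x)).
    rewrite S_plus, S_scal, Ccos by lia. rewrite IH by lia. ring.
Qed.

Lemma SG n j : (1 <= n)%nat -> (j <= 2 * n)%nat -> Sm n (G j) = INR n * INR j.
Proof.
  intros Hn. induction j as [|j IH]; intro Hj.
  - unfold G. rewrite S_cte by exact Hn. simpl; ring.
  - change (G (S j)) with (fun x => G j x + H j x).
    rewrite S_plus, SH by lia. rewrite IH by lia. rewrite S_INR. ring.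
Qed.

Lemma SGG n i : (1 <= n)%nat -> (i <= 2 * n - 1)%nat ->
  Sm n (GG i) = INR n * INR i * (INR i + 1) / 2.
Proof.
  intros Hn. induction i as [|i IH]; intro Hi.
  - unfold GG. rewrite S_cte by exact Hn. simpl; field.
  - change (GG (S i)) with (fun x => GG i x + G (S i) x).
    rewrite S_plus, SG by lia. rewrite IH by lia. rewrite S_INR. field.
Qed.

Lemma th_facts n k : (1 <= n)%nat -> (k <= n - 1)%nat ->
  sin (th n k) <> 0 /\ sin (INR (2 * n) * th n k) ^ 2 = 1.
Proof.
  intros Hn Hk. pose proof (INR_pos n Hn) as Pn. pose proof PI_RGT_0 as Pp.
  assert (Tk : INR k + 1 <= INR n).
  { rewrite <- S_INR. apply le_INR. lia. }
  assert (P0 : 0 <= INR k) by apply pos_INR.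
  split.
  - apply Rgt_not_eq. apply sin_gt_0; unfold th.
    + apply Rdiv_lt_0_compat; nra.
    + apply Rmult_lt_reg_r with (4 * INR n). lra.
      unfold Rdiv. rewrite Rmult_assoc, Rinv_l by lra. nra.
  - rewrite mult_INR. simpl (INR 2).
    replace ((1 + 1) * INR n * th n k) with (INR k * PI + PI / 2) by (unfold th; field; lra).
    rewrite sin_plus, sin_PI2, cos_PI2.
    pose proof (sin2_cos2 (INR k * PI)) as E. unfold Rsqr in E.
    rewrite (sin_eq_0_1 (INR k * PI)) in E.
    + nra.
    + exists (Z.of_nat k). rewrite <- INR_IZR_INZ. reflexivity.
Qed.

Lemma csc2_G n k : (1 <= n)%nat -> (k <= n - 1)%nat ->
  (/ sin (th n k)) ^ 2 = G (2 * n) (th n k).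
Proof.
  intros Hn Hk. destruct (th_facts n k Hn Hk) as [Hs E].
  rewrite LG in E. apply (Rmult_eq_reg_l (sin (th n k) ^ 2)); [rewrite E; field; exact Hs | apply pow_nonzero; exact Hs].
Qed.

Lemma S1 n : (1 <= n)%nat -> Sm n (fun x => (/ sin x) ^ 2) = 2 * INR n * INR n.
Proof.
  intro Hn. rewrite (S_ext n _ (G (2 * n))).
  - rewrite SG by lia. rewrite mult_INR. simpl. ring.
  - intros k Hk. apply csc2_G; auto.
Qed.

Lemma SK n m : (1 <= n)%nat -> (m <= 2 * n)%nat ->
  Sm n (K m) = INR m ^ 2 * (2 * INR n * INR n)
               - 2 * INR n * (INR m - 1) * INR m * (INR m + 1) / 3.
Proof.
  intros Hn. induction m as [|m IH]; intro Hm.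
  - unfold K. rewrite S_cte by exact Hn. simpl; field.
  - change (K (S m)) with (fun x => K m x + (/ sin x) ^ 2 * H m x).
    rewrite S_plus. rewrite IH by lia.
    rewrite (S_ext n _ (fun x => (2 * INR m + 1) * (/ sin x) ^ 2 - 4 * GG m x)).
    + rewrite S_minus, !S_scal, S1, SGG by lia. rewrite S_INR. field.
    + intros k Hk. apply L5. apply (th_facts n k Hn Hk).
Qed.

(* sum_f_R0 f (n-1) = f 0 + ... + f (n-1); index k = j - 1, so 2j-1 = 2k+1 *)
Theorem mainTheorem15 (n : nat) (hn : (1 <= n)%nat) :
  sum_f_R0 (fun k => (csc (PI * (2 * INR k + 1) / (4 * INR n))) ^ 4) (n - 1)
  = 4 * (INR n)^2 * (2 * (INR n)^2 + 1) / 3.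
Proof.
  change (Sm n (fun x => csc x ^ 4) = 4 * (INR n)^2 * (2 * (INR n)^2 + 1) / 3).
  rewrite (S_ext n _ (K (2 * n))).
  - rewrite SK by lia. rewrite mult_INR. simpl (INR 2). field.
  - intros k Hk. rewrite LK, <- csc2_G by auto. unfold csc. ring.
Qed.
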